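(* Let $\mathcal{T}$ be an unrooted tree with leaf set $N=\{1,\dots,n\}$ ($n\ge 3$) in which every internal vertex has degree $3$, and let $\alpha_k\in\mathbb{R}$ be a weight on each edge $k\in E$. Then the Shapley value of the tree game $(N,v_{\mathcal T})$ is a linear function of the edge weights, $\varphi_i(N,v_{\mathcal T})=\sum_{k\in E}\mathbf{M}[i,k]\,\alpha_k$, and its coefficients are given by $$\mathbf{M}[i,k]=\frac{f(i,k)}{n\,c(i,k)}\qquad\text{for all } i\in N,\ k\in E.$$
   Context: An $n$-leaf tree here is an unrooted tree whose leaves are labeled by $N=\{1,\dots,n\}$ and whose internal vertices all have degree 3. Such a tree has $2n-3$ edges: the $n$ leaf edges, each incident to a leaf, and the $n-3$ internal edges $I_1,\dots,I_{n-3}$. Each edge $k\in E$ carries a real weight $\alpha_k$. The tree game $v_{\mathcal T}:2^N\to\mathbb{R}$ assigns to each $S\subseteq N$ the sum of the weights of the edges of the minimal subtree of $\mathcal T$ spanning the leaves in $S$. In particular $v_{\mathcal T}(\emptyset)=0$ and $v_{\mathcal T}(\{i\})=0$. The Shapley value of a cooperative game $(N,v)$ is $$\varphi_i(N,v)=\frac{1}{n!}\sum_{S\subseteq N,\ i\in S}(|S|-1)!\,(n-|S|)!\,\bigl(v(S)-v(S\setminus\{i\})\bigr).$$ Split counts: for a leaf $i$ and an edge $k$, removing $k$ splits $\mathcal T$ into two subtrees. $\mathcal C(i,k)$ is the set of leaves in the subtree containing $i$, and $\mathcal F(i,k)$ is the set of leaves in the other subtree. Their sizes are $c(i,k)=|\mathcal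 C(i,k)|$ and $f(i,k)=|\mathcal F(i,k)|$, so $c(i,k)+f(i,k)=n$. $\mathbf M$ is the $n\times(2n-3)$ matrix of the Shapley transformation. Its rows are indexed by leaves and its columns by edges, in the order leaf edges $1,\dots,n$ followed by internal edges $I_1,\dots,I_{n-3}$. *)

(* Defs.v *)
From mathcomp Require Import all_boot all_order all_algebra.
Set Implicit Arguments. Unset Strict Implicit. Unset Printing Implicit Defensive.
Import Order.TTheory GRing.Theory Num.Theory.
Local Open Scope ring_scope.

Section Defs.
Variable T : finType.

Definition edges (e : rel T) : {set {set T}} :=
  [set A | [exists x, exists y, e x y && (A == [set x; y])]].

Definition restrict (e : rel T) (F : {set {set T}}) : rel T :=
  fun x y => e x y && ([set x; y] \in F).

Definition del_edge (e : rel T) (k : {set T}) : rel T :=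
  fun x y => e x y && ([set x; y] != k).

(* Tree = connected simple graph in which every edge is a bridge
   (minimally connected). *)
Definition is_tree (e : rel T) : Prop :=
  [/\ symmetric e, irreflexive e, (forall x y, connect e x y)
    & (forall x y, e x y -> ~~ connect (del_edge e [set x; y]) x y)].

Definition deg (e : rel T) (x : T) : nat := #|[set y | e x y]|.

Definition cubic_leaf_labelled (n : nat) (e : rel T) (leaf : 'I_n -> T) : Prop :=
  injective leaf /\
  (forall x, if x \in codom leaf then deg e x = 1%N else deg e x = 3%N).

Definition spans (n : nat) (e : rel T) (leaf : 'I_n -> T) (S : {set 'I_n})
  (F : {set {set T}}) : bool :=
  [forall i in S, forall j in S, connect (restrict e F) (leaf i) (leaf j)].

Definition min_subtree_edges (n : nat) (e : rel T) (leaf : 'I_n -> T)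
  (S : {set 'I_n}) : {set {set T}} :=
  [set k in edges e | [forall F : {set {set T}}, spans e leaf S F ==> (k \in F)]].

Definition tree_game (R : numDomainType) (n : nat) (e : rel T) (leaf : 'I_n -> T)
  (alpha : {set T} -> R) (S : {set 'I_n}) : R :=
  \sum_(k in min_subtree_edges e leaf S) alpha k.

Definition c_split (n : nat) (e : rel T) (leaf : 'I_n -> T) (i : 'I_n) (k : {set T}) : nat :=
  #|[set j : 'I_n | connect (del_edge e k) (leaf i) (leaf j)]|.
Definition f_split (n : nat) (e : rel T) (leaf : 'I_n -> T) (i : 'I_n) (k : {set T}) : nat :=
  #|[set j : 'I_n | ~~ connect (del_edge e k) (leaf i) (leaf j)]|.
End Defs.

Definition shapley (R : fieldType) (n : nat) (v : {set 'I_n} -> R) (i : 'I_n) : R :=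
  (n`!)%:R^-1 * \sum_(S : {set 'I_n} | i \in S)
     ((#|S|.-1)`! * (n - #|S|)`!)%:R * (v S - v (S :\ i)).

(* Main.v *)
Require Import Defs.
From mathcomp Require Import all_boot all_order all_algebra.
From mathcomp Require Import zify ring.
Import Order.TTheory GRing.Theory Num.Theory.


Section G.
Variable T : finType.
Variable e : rel T.
Hypothesis se : symmetric e.

Lemma del_sym k : symmetric (del_edge e k).
Proof. by move=> x y; rewrite /del_edge se setUC. Qed.

Lemma del_csym k : connect_sym (del_edge e k).
Proof. exact/sym_connect_sym/del_sym. Qed.

Lemma two_comp x y z : connect e z x ->
  connect (del_edge e [set x; y]) z x || connect (del_edge e [set x; y]) z y.
Proof.
move=> /connectP[p pp xE]; elim: p z pp xE => [|a p IH] z /=.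
  by move=> _ ->; rewrite connect0.
move=> /andP[eza pp] xE; case/orP: (IH a pp xE) => H;
 (case E: ([set z; a] == [set x; y]);
  [have : z \in [set x; y] by rewrite -(eqP E) !inE eqxx|]);
 try (by rewrite !inE => /orP[] /eqP ->; rewrite connect0 ?orbT);
 by rewrite (connect_trans _ H) ?orbT // connect1 // /del_edge eza E.
Qed.

Lemma restrict_del k : restrict e (edges e :\ k) =2 del_edge e k.
Proof.
move=> x y; rewrite /restrict /del_edge in_setD1.
case exy: (e x y) => //=.
have -> : [set x; y] \in edges e.
  by rewrite inE; apply/existsP; exists x; apply/existsP; exists y; rewrite exy eqxx.
by rewrite andbT.
Qed.

Variable n : nat.
Variable leaf : 'I_n -> T.

Definition sep k (S : {set 'I_n}) :=
  [exists a in S, exists b in S, ~~ connect (del_edge e k) (leaf a) (leaf b)].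

Lemma min_mem k S : k \in edges e ->
  (k \in min_subtree_edges e leaf S) = sep k S.
Proof.
move=> ke; rewrite /min_subtree_edges inE ke andTb.
apply/idP/idP => [H | sS].
  have {}H := forallP H; case: (boolP (sep k S)) => // nsep.
  suff: spans e leaf S (edges e :\ k) by move/(implyP (H _)); rewrite !inE eqxx.
  apply/forallP => a; apply/implyP => aS; apply/forallP => b; apply/implyP => bS.
  rewrite (eq_connect (restrict_del k)).
  apply/negPn/negP => nab; move/negP: nsep; apply; rewrite /sep.
  apply/existsP; exists a; rewrite aS /=.
  by apply/existsP; exists b; rewrite bS.
move: sS; rewrite /sep => /existsP[a /andP[aS /existsP[b /andP[bS nab]]]].
apply/forallP => F; apply/implyP => /forallP/(_ a)/implyP/(_ aS)/forallP/(_ b)/implyP/(_ bS) cF.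
apply/negPn/negP => kF; move/negP: nab; apply.
apply: connect_sub cF => x y /andP[exy xyF]; apply: connect1.
rewrite /del_edge exy /=; apply/eqP => E; move: kF; rewrite -E xyF.
by [].
Qed.

Section Marg.
Hypothesis conn : forall x y, connect e x y.
Variable i : 'I_n.

Definition Dk k := [set j | ~~ connect (del_edge e k) (leaf i) (leaf j)].
Definition cond k (S : {set 'I_n}) := (S :\ i \subset Dk k) && (S :\ i != set0).

Lemma joinc k a b z : connect (del_edge e k) a z -> connect (del_edge e k) b z ->
  connect (del_edge e k) a b.
Proof. by move=> h1 h2; apply: connect_trans h1 _; rewrite del_csym. Qed.

Lemma sep_excl k (S : {set 'I_n}) : k \in edges e -> sep k (S :\ i) -> ~~ cond k S.
Proof.
rewrite inE => /existsP[x /existsP[y /andP[_ /eqP ->]]].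
move=> /existsP[a /andP[aS /existsP[b /andP[bS nab]]]].
apply/negP => /andP[/subsetP sub _].
move: (sub a aS) (sub b bS); rewrite !inE => nia nib.
have hu := @two_comp x y (leaf i) (conn (leaf i) x).
have hv := @two_comp x y (leaf a) (conn (leaf a) x).
have hw := @two_comp x y (leaf b) (conn (leaf b) x).
move/negP: nab; apply.
case/orP: hu => hu; case/orP: hv => hv; case/orP: hw => hw;
 first [ exact: (joinc _ _ _ _ hv hw)
       | by move: nia; rewrite (joinc _ _ _ _ hu hv)
       | by move: nib; rewrite (joinc _ _ _ _ hu hw) ].
Qed.

Lemma sep_split k (S : {set 'I_n}) : i \in S -> sep k S = sep k (S :\ i) || cond k S.
Proof.
move=> iS.
have help : forall b, b \in S :\ i -> ~~ connect (del_edge e k) (leaf i) (leaf b) ->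
    sep k (S :\ i) || cond k S.
  move=> b bS nib.
  case: (boolP (S :\ i \subset Dk k)) => sub.
    by rewrite /cond sub /=; apply/orP; right; apply/set0Pn; exists b.
  case/subsetPn: sub => j jS; rewrite inE negbK => cij.
  apply/orP; left; apply/existsP; exists j; rewrite jS /=.
  apply/existsP; exists b; rewrite bS /=.
  by apply/negP => cjb; move/negP: nib; apply; apply: connect_trans cij cjb.
apply/idP/idP.
  move=> /existsP[a /andP[aS /existsP[b /andP[bS nab]]]].
  case: (eqVneq a i) => [ai|ai].
    by subst a; apply: (help b) => //; rewrite !inE bS andbT; apply/eqP => bi;
      move: nab; rewrite bi connect0.
  case: (eqVneq b i) => [bi|bi].
    subst b; apply: (help a); first by rewrite !inE ai.
    by rewrite del_csym.
  apply/orP; left; apply/existsP; exists a; rewrite !inE ai aS /=.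
  by apply/existsP; exists b; rewrite !inE bi bS.
case/orP.
  move=> /existsP[a /andP[aS /existsP[b /andP[bS nab]]]].
  apply/existsP; exists a; rewrite (subsetP (subD1set S i) a aS) /=.
  by apply/existsP; exists b; rewrite (subsetP (subD1set S i) b bS).
move=> /andP[/subsetP sub /set0Pn[b bS]].
apply/existsP; exists i; rewrite iS /=; apply/existsP; exists b.
move: (sub b bS); rewrite inE => ->; rewrite andbT.
exact: (subsetP (subD1set S i) b bS).
Qed.
End Marg.
End G.


Lemma hockey d f : \sum_(t < f.+1) 'C(f - t + d, d) = 'C(f + d + 1, d.+1).
Proof.
elim: f => [|f IH]; first by rewrite big_ord1 /= add0n addn1 !binn.
rewrite big_ord_recl /= subn0.
under eq_bigr => t _ do rewrite /bump /= add1n subSS.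
rewrite IH [in RHS]addSn [in RHS]addSn binS addn1 addnC; congr (_ + _).
Qed.

Lemma termE f d t : t <= f ->
  'C(f, t) * (t`! * (f + d - t)`!) = f`! * d`! * 'C(f - t + d, d).
Proof.
move=> tf; apply/eqP; rewrite -(eqn_pmul2r (fact_gt0 (f - t))); apply/eqP.
have h1 : 'C(f, t) * (t`! * (f - t)`!) = f`! by rewrite bin_fact.
have h2 : 'C(f - t + d, d) * (d`! * (f - t + d - d)`!) = (f - t + d)`!.
  by rewrite bin_fact // leq_addl.
rewrite addnK in h2.
have -> : f + d - t = f - t + d by lia.
rewrite -h2 -h1; ring.
Qed.

Lemma natid f d :
  d.+1 * \sum_(t < f.+1) 'C(f, t) * (t`! * (f + d.+1 - t.+1)`!) = (f + d.+1)`!.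
Proof.
under eq_bigr => t _ do rewrite addnS subSS (@termE f d t (ltn_ord t)).
rewrite -big_distrr /= hockey.
have h := @bin_fact (f + d + 1) d.+1.
have e1 : f + d + 1 - d.+1 = f by lia.
rewrite e1 addn1 -addnS in h; rewrite -h ?leq_addl // ?addnS ?ltnS ?leq_addl // factS addn0; ring.
Qed.

Local Open Scope ring_scope.

Lemma alg (R : fieldType) (a b c : R) : a + b != 0 -> c != 0 -> b != 0 ->
  ((a + b) * c)^-1 * ((a + b) * c / b - c) = a / ((a + b) * b).
Proof. by move=> h1 h2 h3; field; rewrite h1 h2 h3. Qed.

Section Comb.
Variable R : realFieldType.
Variable n : nat.
Variable i : 'I_n.
Variable D : {set 'I_n}.
Hypothesis iD : i \notin D.

Let W t : R := (t`! * (n - t.+1)`!)%:R.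

Lemma step1 :
  \sum_(S : {set 'I_n} | i \in S)
     ((#|S|.-1)`! * (n - #|S|)`!)%:R * ((S :\ i \subset D) && (S :\ i != set0))%:R
  = \sum_(T : {set 'I_n} | T \subset D) W #|T| * (T != set0)%:R :> R.
Proof.
rewrite (reindex_onto (fun T => i |: T) (fun S => S :\ i)) /=; last first.
  by move=> S iS; rewrite setD1K.
rewrite big_mkcond [RHS]big_mkcond; apply: eq_bigr => T _.
case: (boolP (T \subset D)) => TD.
  have iT : i \notin T by apply/negP => /(subsetP TD); apply/negP.
  by rewrite setU11 setU1K // eqxx /= TD cardsU1 iT /= add1n.
case: ifP => // /andP[_ /eqP ->]; by rewrite (negbTE TD) mulr0.
Qed.

Lemma step2 :
  \sum_(T : {set 'I_n} | T \subset D) W #|T| * (T != set0)%:R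
  = \sum_(T : {set 'I_n} | T \subset D) W #|T| - W 0.
Proof.
rewrite [in RHS](bigD1 set0) ?sub0set //= cards0 (bigD1 set0) ?sub0set //=.
rewrite eqxx mulr0 add0r addrC addrK; apply: eq_bigr => T /andP[_ ->].
by rewrite mulr1.
Qed.

Lemma step3 :
  \sum_(T : {set 'I_n} | T \subset D) W #|T|
  = \sum_(t < #|D|.+1) W t *+ 'C(#|D|, t).
Proof.
rewrite (@partition_big _ _ _ _ _ _ (fun T : {set 'I_n} => T \subset D) (fun T : {set 'I_n} => (inord #|T| : 'I_(#|D|.+1))) xpredT) //=.
apply: eq_bigr => t _.
transitivity (\sum_(T : {set 'I_n} | (T \subset D) && (#|T| == t)) W t).
  apply: eq_big; last by move=> T /andP[TD /eqP <-]; rewrite inordK // ltnS subset_leq_card.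
  move=> T; case TD: (T \subset D) => //=.
  by rewrite -val_eqE /= inordK // ltnS subset_leq_card.
rewrite sumr_const -cards_draws; congr (_ *+ _).
by apply: eq_card => A; rewrite !inE.
Qed.

Lemma comb :
  (n`!)%:R^-1 * \sum_(S : {set 'I_n} | i \in S)
     ((#|S|.-1)`! * (n - #|S|)`!)%:R * ((S :\ i \subset D) && (S :\ i != set0))%:R
  = #|D|%:R / (n%:R * (n - #|D|)%:R) :> R.
Proof.
rewrite step1 step2 step3.
set f := #|D|.
have [d nE] : exists d, n = (f + d.+1)%N.
  have h := cardsC D; rewrite card_ord in h.
  have : (0 < #|~: D|)%N by apply/card_gt0P; exists i; rewrite inE.
  by exists (#|~: D|.-1); rewrite /f; lia.
have -> : \sum_(t < f.+1) W t *+ 'C(f, t)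
   = (\sum_(t < f.+1) 'C(f, t) * (t`! * (n - t.+1)`!))%:R.
  by rewrite natr_sum; apply: eq_bigr => t _; rewrite natrM mulr_natl.
set Y := (\sum_(t < f.+1) _)%N.
have hY : (d.+1 * Y)%N = n`!.
  by rewrite /Y nE natid.
have nF : n`! = (n * (n - 1)`!)%N.
  by rewrite nE addnS factS subn1.
rewrite /W fact0 mul1n nF in hY *.
set F := (n - 1)`!.
have hY' : (d.+1)%:R * Y%:R = n%:R * F%:R :> R by rewrite -!natrM hY.
have dn0 : (d.+1)%:R != 0 :> R by rewrite pnatr_eq0.
have Fn0 : F%:R != 0 :> R by rewrite pnatr_eq0 -lt0n fact_gt0.
have nn0 : n%:R != 0 :> R by rewrite pnatr_eq0 nE addnS.
have Ye : Y%:R = n%:R * F%:R / (d.+1)%:R :> R.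
  by rewrite -hY' [_ * Y%:R]mulrC mulfK.
have -> : (n - f)%N = d.+1 by lia.
rewrite Ye natrM.
have nR : n%:R = f%:R + (d.+1)%:R :> R by rewrite nE natrD.
rewrite nR in nn0 *.
exact: alg.
Qed.
End Comb.

Arguments sep {T} e {n} leaf k S.
Arguments min_mem {T e n leaf} k S _.
Arguments sep_split {T e} se {n} leaf {i} k {S} _.
Arguments sep_excl {T e} se {n} leaf conn i {k S} _ _.
Arguments Dk {T} e {n} leaf i k.
Arguments cond {T} e {n} leaf i k S.
Arguments comb R {n i D} iD.

Lemma tg_expand (R : realFieldType) (n : nat) (T : finType) (e : rel T)
  (leaf : 'I_n -> T) (alpha : {set T} -> R) S :
  tree_game e leaf alpha S = \sum_(k in edges e) (sep e leaf k S)%:R * alpha k.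
Proof.
rewrite /tree_game big_mkcond [RHS]big_mkcond; apply: eq_bigr => k _.
case ke: (k \in edges e).
  by rewrite (min_mem _ _ ke); case: (sep _ _ _ _); rewrite ?mul1r ?mul0r.
by rewrite /min_subtree_edges inE ke.
Qed.

Theorem theorem4 (R : realFieldType) (n : nat) (T : finType) (e : rel T)
  (leaf : 'I_n -> T) (alpha : {set T} -> R) :
  (3 <= n)%N -> is_tree e -> cubic_leaf_labelled e leaf ->
  forall i : 'I_n,
    shapley (tree_game e leaf alpha) i =
    \sum_(k in edges e)
       ((f_split e leaf i k)%:R / (n%:R * (c_split e leaf i k)%:R)) * alpha k.
Proof.
move=> _ [se _ conn _] _ i.
rewrite /shapley.
have marg : forall S : {set 'I_n}, i \in S ->
   tree_game e leaf alpha S - tree_game e leaf alpha (S :\ i) =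
   \sum_(k in edges e) (cond e leaf i k S)%:R * alpha k.
  move=> S iS; rewrite !tg_expand -sumrB; apply: eq_bigr => k ke.
  rewrite -mulrBl (sep_split se leaf k iS).
  case: (boolP (sep e leaf k (S :\ i))) => sp.
    by rewrite (negbTE (sep_excl se leaf conn i ke sp)) subrr.
  by rewrite subr0.
under eq_bigr => S iS do rewrite (marg S iS) mulr_sumr.
rewrite exchange_big /= mulr_sumr; apply: eq_bigr => k ke.
under eq_bigr => S iS do rewrite mulrA.
rewrite -mulr_suml mulrA; congr (_ * _).
have iD : i \notin Dk e leaf i k by rewrite inE negbK connect0.
have := comb R iD; rewrite /cond => ->.
have hc : c_split e leaf i k = (n - #|Dk e leaf i k|)%N.
  have h := cardsC (Dk e leaf i k); rewrite card_ord in h.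
  have e1 : c_split e leaf i k = #|~: Dk e leaf i k|.
    by apply: eq_card => j; rewrite !inE negbK.
  rewrite e1; apply/eqP; rewrite -(eqn_add2l #|Dk e leaf i k|) subnKC ?h //.
  by rewrite -[X in (_ <= X)%N](card_ord n) max_card.
by rewrite hc.
Qed.
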